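(* For every positive integer $n$, the set $\mathcal{M}_n$ is a closed subset of $\mathbb{R}$.
   Context: For reals $\xi\ne\xi'$ and a positive integer $n$, $\mu_n(\xi,\xi') = \sup_{(s,t)\in\mathbb{Z}^2\setminus\{0\}} \dfrac{\gcd(t,n)\,|\xi-\xi'|}{|s-t\xi|\,|s-t\xi'|} \in\mathbb{R}\cup\{\infty\}$ (with $\gcd(0,n)=n$), and $\mathcal{M}_n$ is the set of finite values of $\mu_n(\xi,\xi')$ over pairs of reals $\xi\neq\xi'$. *)

(* Defs.v *)
From Stdlib Require Import Reals ZArith Rtopology.
From Coquelicot Require Import Coquelicot.
Open Scope R_scope.

(* One term of the supremum defining mu_n(xi,xi') for (s,t) in Z^2 \ {0}:
   gcd(t,n)|xi-xi'| / (|s-t xi| |s-t xi'|), taken to be +infinity when the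
   denominator vanishes (i.e. s/t equals xi or xi'). *)
Definition mu_term (n : nat) (xi xi' : R) (s t : Z) : Rbar :=
  let d := Rabs (IZR s - IZR t * xi) * Rabs (IZR s - IZR t * xi') in
  if Req_EM_T d 0 then p_infty
  else Finite (IZR (Z.gcd t (Z.of_nat n)) * Rabs (xi - xi') / d).

Definition mu (n : nat) (xi xi' : R) : Rbar :=
  Rbar_lub (fun v : Rbar => exists s t : Z,
              (s <> 0%Z \/ t <> 0%Z) /\ v = mu_term n xi xi' s t).

Definition M (n : nat) : R -> Prop :=
  fun m => exists xi xi' : R, xi <> xi' /\ mu n xi xi' = Finite m.

(* Main.v *)
Require Import Defs.
From Stdlib Require Import Reals ZArith Znumtheory Rtopology Lia Lra Classical IndefiniteDescription.
From Coquelicot Require Import Coquelicot.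
Open Scope R_scope.

Definition Dd (x x' : R) (s t : Z) : R :=
  Rabs (IZR s - IZR t * x) * Rabs (IZR s - IZR t * x').

Lemma Dd_nonneg x x' s t : 0 <= Dd x x' s t.
Proof. unfold Dd; apply Rmult_le_pos; apply Rabs_pos. Qed.

Lemma mob_lin (a b c d s t : Z) (e : R) :
  (a * d - b * c = 1)%Z -> IZR c * e + IZR d <> 0 ->
  IZR (a*s+b*t) - IZR (c*s+d*t) * ((IZR a * e + IZR b)/(IZR c * e + IZR d))
  = (IZR s - IZR t * e) / (IZR c * e + IZR d).
Proof.
  intros Hdet Hq.
  assert (HD : IZR a * IZR d - IZR b * IZR c = 1).
  { rewrite <- !mult_IZR, <- minus_IZR, Hdet; reflexivity. }
  rewrite !plus_IZR, !mult_IZR.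
  apply (Rmult_eq_reg_r (IZR c * e + IZR d)); [|exact Hq].
  transitivity ((IZR s - IZR t*e) *
     (IZR a*IZR d - IZR b*IZR c)); [field; exact Hq| rewrite HD; field; exact Hq].
Qed.

Lemma mob_diff (a b c d : Z) (e e' : R) :
  (a * d - b * c = 1)%Z -> IZR c * e + IZR d <> 0 -> IZR c * e' + IZR d <> 0 ->
  (IZR a * e + IZR b)/(IZR c * e + IZR d) - (IZR a * e' + IZR b)/(IZR c * e' + IZR d)
  = (e - e') / ((IZR c * e + IZR d) * (IZR c * e' + IZR d)).
Proof.
  intros Hdet Hq Hq'.
  assert (HD : IZR a * IZR d - IZR b * IZR c = 1).
  { rewrite <- !mult_IZR, <- minus_IZR, Hdet; reflexivity. }
  transitivity ((e - e') * (IZR a*IZR d - IZR b*IZR c) / ((IZR c * e + IZR d) * (IZR c * e' + IZR d)));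
   [field; split; assumption| rewrite HD; field; split; assumption].
Qed.

Lemma transform n (a b c d : Z) (e e' : R) s t :
  (a * d - b * c = 1)%Z -> IZR c * e + IZR d <> 0 -> IZR c * e' + IZR d <> 0 ->
  mu_term n ((IZR a * e + IZR b)/(IZR c * e + IZR d))
            ((IZR a * e' + IZR b)/(IZR c * e' + IZR d)) (a*s+b*t) (c*s+d*t)
  = if Req_EM_T (Dd e e' s t) 0 then p_infty
    else Finite (IZR (Z.gcd (c*s+d*t) (Z.of_nat n)) * Rabs (e - e') / Dd e e' s t).
Proof.
  intros Hdet Hq Hq'.
  unfold mu_term; cbv zeta.
  rewrite (mob_lin a b c d s t e Hdet Hq), (mob_lin a b c d s t e' Hdet Hq').
  rewrite (mob_diff a b c d e e' Hdet Hq Hq').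
  set (q := IZR c * e + IZR d) in *. set (q' := IZR c * e' + IZR d) in *.
  assert (Hqq : Rabs q * Rabs q' > 0).
  { apply Rmult_lt_0_compat; apply Rabs_pos_lt; assumption. }
  assert (E1 : Rabs ((IZR s - IZR t * e) / q) * Rabs ((IZR s - IZR t * e') / q')
              = Dd e e' s t / (Rabs q * Rabs q')).
  { unfold Dd; rewrite !Rabs_div by assumption. field; split; apply Rabs_no_R0; assumption. }
  rewrite E1.
  rewrite Rabs_div by (apply Rmult_integral_contrapositive; split; assumption).
  rewrite Rabs_mult.
  destruct (Req_EM_T (Dd e e' s t / (Rabs q * Rabs q')) 0) as [H|H];
  destruct (Req_EM_T (Dd e e' s t) 0) as [H'|H']; auto.
  - exfalso. apply H'. apply (Rmult_eq_reg_r (/ (Rabs q * Rabs q'))).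
    + rewrite Rmult_0_l. exact H.
    + apply Rinv_neq_0_compat; lra.
  - exfalso. apply H. rewrite H'. unfold Rdiv; ring.
  - f_equal. field. split; [exact H'|]. split; apply Rabs_no_R0; assumption.
Qed.

Lemma pigeon : forall N (f : nat -> nat), (forall j, (j <= N)%nat -> (f j < N)%nat) ->
  exists i j, (i < j <= N)%nat /\ f i = f j.
Proof.
  induction N as [|N IH]; intros f Hf.
  - specialize (Hf 0%nat (le_n 0)). lia.
  - destruct (classic (exists i, (i <= N)%nat /\ f i = f (S N))) as [[i [Hi Hfi]]|Hno].
    + exists i, (S N). split; [lia|exact Hfi].
    + set (g := fun j => if Nat.ltb (f j) (f (S N)) then f j else pred (f j)).
      assert (Hne : forall j, (j <= N)%nat -> f j <> f (S N)).
      { intros j Hj E. apply Hno. exists j. split; assumption. }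
      destruct (IH g) as [i [j [Hij Hg]]].
      { intros j Hj. unfold g. pose proof (Hf j ltac:(lia)). pose proof (Hf (S N) ltac:(lia)).
        pose proof (Hne j Hj).
        destruct (Nat.ltb_spec (f j) (f (S N))); lia. }
      exists i, j. split; [lia|].
      unfold g in Hg. pose proof (Hne i ltac:(lia)). pose proof (Hne j ltac:(lia)).
      destruct (Nat.ltb_spec (f i) (f (S N))); destruct (Nat.ltb_spec (f j) (f (S N))); lia.
Qed.

Lemma Int_part_lt (y : R) (k : Z) : y < IZR k -> (Int_part y < k)%Z.
Proof.
  intros H. destruct (base_Int_part y) as [H1 _].
  apply lt_IZR. lra.
Qed.

Lemma Int_part_ge (y : R) (k : Z) : IZR k <= y -> (k <= Int_part y)%Z.
Proof.
  intros H. destruct (base_Int_part y) as [_ H2].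
  assert (IZR k < IZR (Int_part y) + 1) by lra.
  rewrite <- plus_IZR in H0. apply lt_IZR in H0. lia.
Qed.

Lemma dirichlet (x : R) (N : nat) : (1 <= N)%nat ->
  exists s t : Z, (1 <= t <= Z.of_nat N)%Z /\ Rabs (IZR s - IZR t * x) < / INR N.
Proof.
  intros HN.
  set (fr := fun j : nat => INR j * x - IZR (Int_part (INR j * x))).
  assert (Hfr : forall j, 0 <= fr j < 1).
  { intros j. unfold fr. destruct (base_Int_part (INR j * x)). lra. }
  assert (HNpos : 0 < INR N) by (apply lt_0_INR; lia).
  set (box := fun j => Z.to_nat (Int_part (INR N * fr j))).
  destruct (pigeon N box) as [i [j [Hij Hb]]].
  { intros j _. unfold box.
    assert (H0 : (0 <= Int_part (INR N * fr j))%Z).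
    { apply Int_part_ge. simpl. pose proof (Hfr j). nra. }
    assert (H1 : (Int_part (INR N * fr j) < Z.of_nat N)%Z).
    { apply Int_part_lt. rewrite <- INR_IZR_INZ. pose proof (Hfr j). nra. }
    lia. }
  exists (Int_part (INR j * x) - Int_part (INR i * x))%Z, (Z.of_nat j - Z.of_nat i)%Z.
  split; [lia|].
  unfold box in Hb.
  assert (Hk : Int_part (INR N * fr i) = Int_part (INR N * fr j)).
  { assert (0 <= Int_part (INR N * fr i))%Z by (apply Int_part_ge; simpl; pose proof (Hfr i); nra).
    assert (0 <= Int_part (INR N * fr j))%Z by (apply Int_part_ge; simpl; pose proof (Hfr j); nra).
    lia. }
  destruct (base_Int_part (INR N * fr i)) as [A1 A2].
  destruct (base_Int_part (INR N * fr j)) as [B1 B2].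
  rewrite Hk in A1, A2.
  assert (Habs : Rabs (INR N * fr j - INR N * fr i) < 1).
  { apply Rabs_def1; lra. }
  assert (E : IZR (Int_part (INR j * x) - Int_part (INR i * x)) -
              IZR (Z.of_nat j - Z.of_nat i) * x = - (fr j - fr i)).
  { unfold fr. rewrite !minus_IZR, <- !INR_IZR_INZ. ring. }
  rewrite E, Rabs_Ropp.
  replace (INR N * fr j - INR N * fr i) with (INR N * (fr j - fr i)) in Habs by ring.
  rewrite Rabs_mult, (Rabs_right (INR N)) in Habs by lra.
  apply (Rmult_lt_reg_l (INR N)); [lra|]. rewrite Rinv_r by lra. exact Habs.
Qed.

Lemma lub_spec E : Rbar_is_lub E (Rbar_lub E).
Proof. unfold Rbar_lub. destruct (Rbar_ex_lub E) as [l Hl]. exact Hl. Qed.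

Lemma mu_ub n x x' m s t : mu n x x' = Finite m -> (s <> 0 \/ t <> 0)%Z ->
  Rbar_le (mu_term n x x' s t) (Finite m).
Proof.
  intros Hm Hst. destruct (lub_spec (fun v : Rbar => exists s t : Z,
              (s <> 0%Z \/ t <> 0%Z) /\ v = mu_term n x x' s t)) as [Hub _].
  unfold mu in Hm. rewrite Hm in Hub.
  apply Hub. exists s, t. auto.
Qed.

Lemma mu_near n x x' m eps : mu n x x' = Finite m -> 0 < eps ->
  exists s t, (s <> 0 \/ t <> 0)%Z /\ Rbar_lt (Finite (m - eps)) (mu_term n x x' s t).
Proof.
  intros Hm He. apply NNPP. intros Hno.
  destruct (lub_spec (fun v : Rbar => exists s t : Z,
              (s <> 0%Z \/ t <> 0%Z) /\ v = mu_term n x x' s t)) as [_ Hlub].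
  unfold mu in Hm. rewrite Hm in Hlub.
  assert (Hb : Rbar_le (Finite m) (Finite (m - eps))).
  { apply Hlub. intros v [s [t [Hst Hv]]]. subst v.
    apply Rbar_not_lt_le. intros Hlt. apply Hno. exists s, t. auto. }
  simpl in Hb. lra.
Qed.

Lemma term_fin n x x' m s t : Rbar_le (mu_term n x x' s t) (Finite m) ->
  Dd x x' s t <> 0 /\ IZR (Z.gcd t (Z.of_nat n)) * Rabs (x - x') <= m * Dd x x' s t.
Proof.
  unfold mu_term; cbv zeta. fold (Dd x x' s t).
  destruct (Req_EM_T (Dd x x' s t) 0) as [H|H]; simpl; [tauto|].
  intros Hle. split; [exact H|].
  pose proof (Dd_nonneg x x' s t).
  assert (Hp : 0 < Dd x x' s t) by lra.
  apply (Rmult_le_compat_r (Dd x x' s t)) in Hle; [|lra].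
  unfold Rdiv in Hle. rewrite Rmult_assoc, Rinv_l, Rmult_1_r in Hle by lra. exact Hle.
Qed.

Lemma term_near n x x' r s t : Dd x x' s t <> 0 -> Rbar_lt (Finite r) (mu_term n x x' s t) ->
  r * Dd x x' s t < IZR (Z.gcd t (Z.of_nat n)) * Rabs (x - x').
Proof.
  unfold mu_term; cbv zeta. fold (Dd x x' s t).
  destruct (Req_EM_T (Dd x x' s t) 0) as [H|H]; simpl; [tauto|].
  intros _ Hle.
  pose proof (Dd_nonneg x x' s t).
  assert (Hp : 0 < Dd x x' s t) by lra.
  apply (Rmult_lt_compat_r (Dd x x' s t)) in Hle; [|lra].
  unfold Rdiv in Hle. rewrite Rmult_assoc, Rinv_l, Rmult_1_r in Hle by lra. exact Hle.
Qed.

Lemma gcd_ge1 (t : Z) (n : nat) : (0 < n)%nat -> 1 <= IZR (Z.gcd t (Z.of_nat n)).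
Proof.
  intros Hn. apply IZR_le.
  assert (Z.gcd t (Z.of_nat n) <> 0%Z) by (intro E; apply Z.gcd_eq_0 in E; lia).
  pose proof (Z.gcd_nonneg t (Z.of_nat n)). lia.
Qed.

Lemma M_lb n : (0 < n)%nat -> forall m, M n m -> 1/5 <= m.
Proof.
  intros Hn m [x [x' [Hxx Hm]]].
  set (dl := Rabs (x - x')).
  assert (Hdl : 0 < dl) by (apply Rabs_pos_lt; intro; apply Hxx; lra).
  destruct (Rle_lt_dec (1/5) dl) as [Hbig|Hsmall].
  - destruct (term_fin n x x' m 1 0 (mu_ub n x x' m 1 0 Hm (or_introl (ltac:(discriminate) : (1 <> 0)%Z)))) as [_ H].
    unfold Dd in H.
    rewrite Z.gcd_0_l, Z.abs_eq in H by lia.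
    rewrite !Rmult_0_l, !Rminus_0_r, Rabs_R1, Rmult_1_r in H.
    assert (1 <= IZR (Z.of_nat n)) by (apply IZR_le; lia).
    fold dl in H. nra.
  - set (r := / sqrt dl).
    assert (Hsq : 0 < sqrt dl) by (apply sqrt_lt_R0; lra).
    assert (Hsq2 : sqrt dl * sqrt dl = dl) by (apply sqrt_sqrt; lra).
    assert (Hsq1 : sqrt dl < 1).
    { rewrite <- sqrt_1. apply sqrt_lt_1_alt. lra. }
    assert (Hr1 : 1 < r).
    { unfold r. apply (Rmult_lt_reg_l (sqrt dl)); [lra|]. rewrite Rinv_r by lra. lra. }
    assert (Hrr : r * r * dl = 1).
    { transitivity (dl / (sqrt dl * sqrt dl)); [unfold r; field; lra | rewrite Hsq2; field; lra]. }
    set (k := Int_part r).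
    destruct (base_Int_part r) as [Hk1 Hk2]. fold k in Hk1, Hk2.
    assert (Hk : (1 <= k)%Z) by (apply Int_part_ge; simpl; lra).
    set (N := Z.to_nat k).
    assert (HNk : INR N = IZR k) by (unfold N; rewrite INR_IZR_INZ, Z2Nat.id; [reflexivity|lia]).
    assert (HN1 : (1 <= N)%nat) by (unfold N; lia).
    destruct (dirichlet x N HN1) as [s [t [Ht Happ]]].
    rewrite HNk in Happ.
    assert (HkR : 1 <= IZR k) by (apply IZR_le; lia).
    assert (Htk : 1 <= IZR t <= IZR k).
    { split; apply IZR_le; lia. }
    destruct (term_fin n x x' m s t (mu_ub n x x' m s t Hm (or_intror (ltac:(lia) : (t <> 0)%Z)))) as [HD H].
    pose proof (gcd_ge1 t n Hn).
    fold dl in H. unfold Dd in H, HD.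
    set (A := Rabs (IZR s - IZR t * x)) in *.
    set (B := Rabs (IZR s - IZR t * x')) in *.
    assert (HB : B <= A + IZR k * dl).
    { unfold B, A, dl.
      replace (IZR s - IZR t * x') with ((IZR s - IZR t * x) + IZR t * (x - x')) by ring.
      eapply Rle_trans; [apply Rabs_triang|]. rewrite Rabs_mult.
      rewrite (Rabs_right (IZR t)) by lra.
      pose proof (Rabs_pos (x - x')). nra. }
    assert (HA0 : 0 <= A) by apply Rabs_pos.
    assert (HB0 : 0 <= B) by apply Rabs_pos.
    assert (Hm0 : 0 < m).
    { destruct (Rle_lt_dec m 0); [|lra]. nra. }
    assert (HAk : A * IZR k <= 1).
    { apply (Rmult_lt_compat_r (IZR k)) in Happ; [|lra].
      rewrite Rinv_l in Happ by lra. lra. }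
    assert (H4 : 1 < 4 * IZR k * IZR k * dl).
    { assert (r < 2 * IZR k) by lra. nra. }
    assert (HAB : A * B <= 5 * dl).
    { assert (A * B <= A * A + A * IZR k * dl) by nra.
      assert (A * A <= 4 * dl).
      { assert (H5 : A * A * (IZR k * IZR k) <= 1).
        { assert (0 <= A * IZR k) by (apply Rmult_le_pos; lra).
          replace (A * A * (IZR k * IZR k)) with ((A * IZR k) * (A * IZR k)) by ring.
          nra. }
        assert (H6 : A * A * 1 <= A * A * (4 * IZR k * IZR k * dl)).
        { apply Rmult_le_compat_l; [nra|lra]. }
        assert (H7 : A * A * (IZR k * IZR k) * (4 * dl) <= 1 * (4 * dl)).
        { apply Rmult_le_compat_r; lra. }
        nra. }
      nra. }
    nra.
Qed.

Lemma mu_term_fin n x x' s t : Dd x x' s t <> 0 ->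
  mu_term n x x' s t = Finite (IZR (Z.gcd t (Z.of_nat n)) * Rabs (x - x') / Dd x x' s t).
Proof.
  intros H. unfold mu_term; cbv zeta. fold (Dd x x' s t).
  destruct (Req_EM_T (Dd x x' s t) 0); [contradiction|reflexivity].
Qed.

Lemma normalize n (hn : (0 < n)%nat) x x' m eps : x <> x' -> mu n x x' = Finite m -> 0 < eps ->
  exists a b c d e e', (a*d - b*c = 1)%Z /\ 0 <= e <= 1 /\
  (forall s' t', (s' <> 0 \/ t' <> 0)%Z -> Dd e e' s' t' <> 0 /\
      IZR (Z.gcd (c*s'+d*t') (Z.of_nat n)) * Rabs (e - e') <= m * Dd e e' s' t') /\
  m - eps <= IZR (Z.gcd c (Z.of_nat n)) * Rabs (e - e').
Proof.
  intros Hxx Hm He.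
  destruct (mu_near n x x' m eps Hm He) as [s [t [Hst Hnear]]].
  destruct (term_fin n x x' m s t (mu_ub n x x' m s t Hm Hst)) as [HDst _].
  pose proof (term_near n x x' (m - eps) s t HDst Hnear) as Hn1.
  set (g := Z.gcd s t).
  assert (Hg0 : (0 < g)%Z).
  { pose proof (Z.gcd_nonneg s t). assert (g <> 0%Z) by (intro E; apply Z.gcd_eq_0 in E; lia). lia. }
  destruct (Z.gcd_divide_l s t) as [s0 Hs0]. destruct (Z.gcd_divide_r s t) as [t0 Ht0].
  fold g in Hs0, Ht0.
  assert (Hcop : Z.gcd s0 t0 = 1%Z).
  { assert (E : Z.gcd (s0 * g) (t0 * g) = (Z.gcd s0 t0 * g)%Z) by (apply Z.gcd_mul_mono_r_nonneg; lia).
    rewrite <- Hs0, <- Ht0 in E. fold g in E. nia. }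
  assert (Hst0 : (s0 <> 0 \/ t0 <> 0)%Z) by (destruct Hst; [left|right]; intro E; rewrite E in *; lia).
  destruct (term_fin n x x' m s0 t0 (mu_ub n x x' m s0 t0 Hm Hst0)) as [HD0 _].
  assert (HDg : Dd x x' s t = IZR g * IZR g * Dd x x' s0 t0).
  { unfold Dd. rewrite Hs0, Ht0, !mult_IZR.
    replace (IZR s0 * IZR g - IZR t0 * IZR g * x) with (IZR g * (IZR s0 - IZR t0 * x)) by ring.
    replace (IZR s0 * IZR g - IZR t0 * IZR g * x') with (IZR g * (IZR s0 - IZR t0 * x')) by ring.
    rewrite !Rabs_mult, (Rabs_right (IZR g)) by (apply Rle_ge, IZR_le; lia). ring. }
  assert (Hgcd : (Z.gcd t (Z.of_nat n) <= g * Z.gcd t0 (Z.of_nat n))%Z).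
  { apply Z.divide_pos_le.
    - assert (Z.gcd t0 (Z.of_nat n) <> 0%Z) by (intro E; apply Z.gcd_eq_0 in E; lia).
      pose proof (Z.gcd_nonneg t0 (Z.of_nat n)). nia.
    - rewrite <- Z.gcd_mul_mono_l_nonneg by lia.
      apply Z.gcd_greatest.
      + rewrite Ht0, Z.mul_comm. apply Z.gcd_divide_l.
      + apply Z.divide_mul_r. apply Z.gcd_divide_r. }
  assert (Hnear0 : (m - eps) * Dd x x' s0 t0 <= IZR (Z.gcd t0 (Z.of_nat n)) * Rabs (x - x')).
  { apply IZR_le in Hgcd. rewrite mult_IZR in Hgcd. rewrite HDg in Hn1.
    pose proof (Dd_nonneg x x' s0 t0).
    assert (HgR : 1 <= IZR g) by (apply IZR_le; lia).
    pose proof (Rabs_pos (x - x')).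
    pose proof (gcd_ge1 t0 n hn).
    destruct (Rle_lt_dec (m - eps) 0) as [Hneg|Hpos].
    - assert ((m - eps) * Dd x x' s0 t0 <= 0) by nra. nra.
    - set (P := (m - eps) * Dd x x' s0 t0).
      assert (HP : 0 <= P) by (unfold P; apply Rmult_le_pos; lra).
      assert (A1 : P * IZR g <= P * (IZR g * IZR g)).
      { apply Rmult_le_compat_l; [exact HP| nra]. }
      assert (A2 : IZR (Z.gcd t (Z.of_nat n)) * Rabs (x - x') <= IZR g * IZR (Z.gcd t0 (Z.of_nat n)) * Rabs (x - x')).
      { apply Rmult_le_compat_r; [lra|exact Hgcd]. }
      assert (A0 : P * (IZR g * IZR g) = (m - eps) * (IZR g * IZR g * Dd x x' s0 t0)) by (unfold P; ring).
      assert (A3 : P * IZR g < IZR g * (IZR (Z.gcd t0 (Z.of_nat n)) * Rabs (x - x'))) by lra.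
      assert (A4 : P <= P * IZR g) by nra.
      assert (A5 : P * IZR g < (IZR (Z.gcd t0 (Z.of_nat n)) * Rabs (x - x')) * IZR g) by lra.
      apply Rmult_lt_reg_r in A5; lra. }
  destruct (Z.gcd_bezout s0 t0 1 Hcop) as [u [v Huv]].
  set (d := u). set (b := (- v)%Z).
  assert (Hdet0 : (s0 * d - b * t0 = 1)%Z) by (unfold d, b; lia).
  assert (Hdet0R : IZR s0 * IZR d - IZR b * IZR t0 = 1).
  { rewrite <- !mult_IZR, <- minus_IZR, Hdet0. reflexivity. }
  unfold Dd in HD0.
  set (p := IZR s0 - IZR t0 * x) in *. set (p' := IZR s0 - IZR t0 * x') in *.
  assert (Hp : p <> 0) by (intro E; apply HD0; rewrite E, Rabs_R0; ring).
  assert (Hp' : p' <> 0) by (intro E; apply HD0; rewrite E, Rabs_R0; ring).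
  set (e0 := (IZR d * x - IZR b) / p). set (e0' := (IZR d * x' - IZR b) / p').
  set (j := Int_part e0).
  destruct (base_Int_part e0) as [Hj1 Hj2]. fold j in Hj1, Hj2.
  set (e := e0 - IZR j). set (e' := e0' - IZR j).
  set (A := s0). set (B := (b + j * s0)%Z). set (C := t0). set (D := (d + j * t0)%Z).
  assert (Hdet : (A * D - B * C = 1)%Z).
  { unfold A, B, C, D. replace (s0 * (d + j * t0) - (b + j * s0) * t0)%Z with (s0 * d - b * t0)%Z by ring.
    exact Hdet0. }
  assert (Hq : forall y q, q = IZR s0 - IZR t0 * y -> q <> 0 ->
     IZR C * ((IZR d * y - IZR b) / q - IZR j) + IZR D = / q /\
     IZR A * ((IZR d * y - IZR b) / q - IZR j) + IZR B = y / q).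
  { intros y q Eq Hq0. unfold A, B, C, D. rewrite !plus_IZR, !mult_IZR. split.
    - transitivity ((IZR s0 * IZR d - IZR b * IZR t0) / q); [|rewrite Hdet0R; field; exact Hq0].
      rewrite Eq. field. rewrite <- Eq. exact Hq0.
    - transitivity (y * (IZR s0 * IZR d - IZR b * IZR t0) / q); [|rewrite Hdet0R; field; exact Hq0].
      rewrite Eq. field. rewrite <- Eq. exact Hq0. }
  destruct (Hq x p eq_refl Hp) as [Hq1 Hq2]. destruct (Hq x' p' eq_refl Hp') as [Hq1' Hq2'].
  fold e0 e in Hq1, Hq2. fold e0' e' in Hq1', Hq2'.
  assert (Hce : IZR C * e + IZR D <> 0) by (rewrite Hq1; apply Rinv_neq_0_compat; exact Hp).
  assert (Hce' : IZR C * e' + IZR D <> 0) by (rewrite Hq1'; apply Rinv_neq_0_compat; exact Hp').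
  assert (Hx : x = (IZR A * e + IZR B) / (IZR C * e + IZR D)).
  { rewrite Hq1, Hq2. field. exact Hp. }
  assert (Hx' : x' = (IZR A * e' + IZR B) / (IZR C * e' + IZR D)).
  { rewrite Hq1', Hq2'. field. exact Hp'. }
  exists A, B, C, D, e, e'.
  split; [exact Hdet|]. split; [unfold e; lra|]. split.
  - intros s' t' Hst'.
    pose proof (transform n A B C D e e' s' t' Hdet Hce Hce') as T.
    rewrite <- Hx, <- Hx' in T.
    assert (Hnz : (A * s' + B * t' <> 0 \/ C * s' + D * t' <> 0)%Z).
    { apply NNPP. intros Hc.
      assert (E1 : (A * s' + B * t' = 0)%Z) by (apply NNPP; intro; apply Hc; left; assumption).
      assert (E2 : (C * s' + D * t' = 0)%Z) by (apply NNPP; intro; apply Hc; right; assumption).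
      assert (S1 : s' = 0%Z).
      { replace s' with (s' * (A * D - B * C))%Z by (rewrite Hdet; ring).
        replace (s' * (A * D - B * C))%Z with (D * (A * s' + B * t') - B * (C * s' + D * t'))%Z by ring.
        rewrite E1, E2. ring. }
      assert (S2 : t' = 0%Z).
      { replace t' with (t' * (A * D - B * C))%Z by (rewrite Hdet; ring).
        replace (t' * (A * D - B * C))%Z with (A * (C * s' + D * t') - C * (A * s' + B * t'))%Z by ring.
        rewrite E1, E2. ring. }
      destruct Hst'; contradiction. }
    pose proof (mu_ub n x x' m _ _ Hm Hnz) as U.
    rewrite T in U.
    destruct (Req_EM_T (Dd e e' s' t') 0) as [HZ|HZ]; simpl in U; [contradiction|].
    split; [exact HZ|].
    pose proof (Dd_nonneg e e' s' t').
    assert (Hp0 : 0 < Dd e e' s' t') by lra.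
    apply (Rmult_le_compat_r (Dd e e' s' t')) in U; [|lra].
    unfold Rdiv in U. rewrite Rmult_assoc, Rinv_l, Rmult_1_r in U by lra. exact U.
  - pose proof (transform n A B C D e e' 1 0 Hdet Hce Hce') as T.
    rewrite <- Hx, <- Hx' in T.
    replace (A * 1 + B * 0)%Z with s0 in T by (unfold A; ring).
    replace (C * 1 + D * 0)%Z with t0 in T by (unfold C; ring).
    assert (HD1 : Dd e e' 1 0 = 1).
    { unfold Dd. simpl. rewrite !Rmult_0_l, !Rminus_0_r, Rabs_R1. ring. }
    rewrite HD1 in T.
    destruct (Req_EM_T 1 0) as [HZ|_]; [lra|].
    assert (HD0' : Dd x x' s0 t0 <> 0) by (unfold Dd; exact HD0).
    rewrite (mu_term_fin n x x' s0 t0 HD0') in T.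
    injection T as T. rewrite Rdiv_1_r in T. fold C in T. rewrite <- T.
    pose proof (Dd_nonneg x x' s0 t0).
    assert (Hp0 : 0 < Dd x x' s0 t0) by lra.
    apply (Rmult_le_reg_r (Dd x x' s0 t0)); [lra|].
    unfold Rdiv. rewrite Rmult_assoc, Rinv_l, Rmult_1_r by lra. exact Hnear0.
Qed.

Lemma lim_abs_diff (u v : nat -> R) (l l' : R) : is_lim_seq u l -> is_lim_seq v l' ->
  is_lim_seq (fun k => Rabs (u k - v k)) (Rabs (l - l')).
Proof.
  intros Hu Hv. exact (is_lim_seq_abs _ (Finite (l - l')) (is_lim_seq_minus' u v l l' Hu Hv)).
Qed.

Lemma lim_Dd (u v : nat -> R) (l l' : R) s t : is_lim_seq u l -> is_lim_seq v l' ->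
  is_lim_seq (fun k => Dd (u k) (v k) s t) (Dd l l' s t).
Proof.
  intros Hu Hv. unfold Dd.
  apply (is_lim_seq_mult' (fun k => Rabs (IZR s - IZR t * u k)) (fun k => Rabs (IZR s - IZR t * v k))).
  - apply (lim_abs_diff (fun _ => IZR s) (fun k => IZR t * u k)). apply is_lim_seq_const.
    apply (is_lim_seq_scal_l u (IZR t) l). exact Hu.
  - apply (lim_abs_diff (fun _ => IZR s) (fun k => IZR t * v k)). apply is_lim_seq_const.
    apply (is_lim_seq_scal_l v (IZR t) l'). exact Hv.
Qed.

Lemma lim_le (u v : nat -> R) (l l' : R) : (forall k, u k <= v k) -> is_lim_seq u l -> is_lim_seq v l' -> l <= l'.
Proof. intros H Hu Hv. exact (is_lim_seq_le u v l l' H Hu Hv). Qed.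

Lemma limit_M n (hn : (0 < n)%nat) (a b c d : Z) (Hdet : (a * d - b * c = 1)%Z)
  (ue ue' um ueps : nat -> R) (l l' mm : R) :
  is_lim_seq ue l -> is_lim_seq ue' l' -> is_lim_seq um mm -> is_lim_seq ueps 0 -> 1/5 <= mm ->
  (forall k s' t', (s' <> 0 \/ t' <> 0)%Z ->
     IZR (Z.gcd (c*s'+d*t') (Z.of_nat n)) * Rabs (ue k - ue' k) <= um k * Dd (ue k) (ue' k) s' t') ->
  (forall k, um k - ueps k <= IZR (Z.gcd c (Z.of_nat n)) * Rabs (ue k - ue' k)) ->
  M n mm.
Proof.
  intros Hl Hl' Hm Heps Hmm Hi Hii.
  assert (Lab := lim_abs_diff ue ue' l l' Hl Hl').
  assert (Li : forall s' t', (s' <> 0 \/ t' <> 0)%Z ->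
     IZR (Z.gcd (c*s'+d*t') (Z.of_nat n)) * Rabs (l - l') <= mm * Dd l l' s' t').
  { intros s' t' Hst.
    apply (lim_le (fun k => IZR (Z.gcd (c*s'+d*t') (Z.of_nat n)) * Rabs (ue k - ue' k))
                  (fun k => um k * Dd (ue k) (ue' k) s' t')).
    - intros k. apply Hi. exact Hst.
    - apply (is_lim_seq_scal_l _ _ (Rabs (l - l'))). exact Lab.
    - apply is_lim_seq_mult'; [exact Hm| apply lim_Dd; assumption]. }
  assert (Lii : mm <= IZR (Z.gcd c (Z.of_nat n)) * Rabs (l - l')).
  { replace mm with (mm - 0) by ring.
    apply (lim_le (fun k => um k - ueps k) (fun k => IZR (Z.gcd c (Z.of_nat n)) * Rabs (ue k - ue' k))).
    - exact Hii.
    - apply is_lim_seq_minus'; assumption.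
    - apply (is_lim_seq_scal_l _ _ (Rabs (l - l'))). exact Lab. }
  set (dl := Rabs (l - l')) in *.
  assert (Hdl : 0 < dl).
  { destruct (Rle_lt_dec dl 0) as [H|H]; [|exact H].
    pose proof (Rabs_pos (l - l')). fold dl in H0. assert (dl = 0) by lra.
    rewrite H1, Rmult_0_r in Lii. lra. }
  assert (HDpos : forall s' t', (s' <> 0 \/ t' <> 0)%Z -> Dd l l' s' t' <> 0).
  { intros s' t' Hst E. specialize (Li s' t' Hst). rewrite E, Rmult_0_r in Li.
    pose proof (gcd_ge1 (c*s'+d*t') n hn). nra. }
  assert (Hcd : (-d <> 0 \/ c <> 0)%Z).
  { destruct (Z.eq_dec c 0); [left|right]; [|assumption]. intro. subst. lia. }
  pose proof (HDpos (-d)%Z c Hcd) as Hq0. unfold Dd in Hq0.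
  assert (Hq : IZR c * l + IZR d <> 0).
  { intro E. apply Hq0. replace (IZR (- d) - IZR c * l) with (- (IZR c * l + IZR d)) by (rewrite opp_IZR; ring).
    rewrite E, Ropp_0, Rabs_R0. ring. }
  assert (Hq' : IZR c * l' + IZR d <> 0).
  { intro E. apply Hq0. replace (IZR (- d) - IZR c * l') with (- (IZR c * l' + IZR d)) by (rewrite opp_IZR; ring).
    rewrite E, Ropp_0, Rabs_R0. ring. }
  exists ((IZR a * l + IZR b)/(IZR c * l + IZR d)), ((IZR a * l' + IZR b)/(IZR c * l' + IZR d)).
  split.
  - intro E. apply Rminus_diag_eq in E. rewrite (mob_diff a b c d l l' Hdet Hq Hq') in E.
    unfold Rdiv in E. apply Rmult_integral in E. destruct E as [E|E].
    + assert (l = l') by lra. unfold dl in Hdl. subst. rewrite Rminus_diag, Rabs_R0 in Hdl. lra.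
    + revert E. apply Rinv_neq_0_compat. apply Rmult_integral_contrapositive. split; assumption.
  - apply Rbar_is_lub_unique. split.
    + intros v [s [t [Hst Hv]]]. subst v.
      set (s' := (d * s - b * t)%Z). set (t' := (- c * s + a * t)%Z).
      assert (Es : s = (a * s' + b * t')%Z).
      { unfold s', t'. replace s with (s * (a * d - b * c))%Z at 1 by (rewrite Hdet; ring). ring. }
      assert (Et : t = (c * s' + d * t')%Z).
      { unfold s', t'. replace t with (t * (a * d - b * c))%Z at 1 by (rewrite Hdet; ring). ring. }
      assert (Hst' : (s' <> 0 \/ t' <> 0)%Z).
      { apply NNPP. intro Hc.
        assert (s' = 0%Z) by (apply NNPP; intro; apply Hc; left; assumption).
        assert (t' = 0%Z) by (apply NNPP; intro; apply Hc; right; assumption).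
        rewrite H, H0 in Es, Et. destruct Hst; lia. }
      rewrite Es, Et, (transform n a b c d l l' s' t' Hdet Hq Hq').
      destruct (Req_EM_T (Dd l l' s' t') 0) as [HZ|HZ]; [exfalso; exact (HDpos s' t' Hst' HZ)|].
      simpl. fold dl.
      pose proof (Dd_nonneg l l' s' t').
      apply (Rmult_le_reg_r (Dd l l' s' t')); [lra|].
      unfold Rdiv. rewrite Rmult_assoc, Rinv_l, Rmult_1_r by lra. apply Li. exact Hst'.
    + intros B HB.
      assert (Hv : Rbar_le (mu_term n ((IZR a * l + IZR b)/(IZR c * l + IZR d))
               ((IZR a * l' + IZR b)/(IZR c * l' + IZR d)) (a * 1 + b * 0) (c * 1 + d * 0)) B).
      { apply HB. exists (a * 1 + b * 0)%Z, (c * 1 + d * 0)%Z. split; [|reflexivity].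
        destruct (Z.eq_dec a 0); [right|left]; [|lia]. intro. subst. lia. }
      rewrite (transform n a b c d l l' 1 0 Hdet Hq Hq') in Hv.
      assert (HD1 : Dd l l' 1 0 = 1).
      { unfold Dd. simpl. rewrite !Rmult_0_l, !Rminus_0_r, Rabs_R1. ring. }
      rewrite HD1 in Hv. destruct (Req_EM_T 1 0) as [HZ|_]; [lra|].
      replace (c * 1 + d * 0)%Z with c in Hv by ring.
      rewrite Rdiv_1_r in Hv. fold dl in Hv.
      eapply Rbar_le_trans; [|exact Hv]. simpl. exact Lii.
Qed.

Lemma choice_fun {A : Type} (P : nat -> A -> Prop) :
  (forall k, exists y, P k y) -> exists f : nat -> A, forall k, P k (f k).
Proof.
  intros H. exists (fun k => proj1_sig (constructive_indefinite_description _ (H k))).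
  intros k. exact (proj2_sig (constructive_indefinite_description _ (H k))).
Qed.

Lemma lim_inv_seq : is_lim_seq (fun k => / (INR k + 1)) 0.
Proof.
  apply is_lim_seq_spec. intros eps.
  destruct (archimed (/ eps)) as [Hup _].
  exists (Z.to_nat (up (/ eps))). intros k Hk.
  pose proof (cond_pos eps) as He.
  assert (Hk' : IZR (up (/ eps)) <= INR k).
  { destruct (Z_lt_le_dec (up (/eps)) 0) as [Hneg|Hnn].
    - apply Rle_trans with 0; [apply IZR_le; lia| apply pos_INR].
    - rewrite INR_IZR_INZ. apply IZR_le. lia. }
  assert (HkP : 0 < INR k + 1) by (pose proof (pos_INR k); lra).
  rewrite Rminus_0_r, Rabs_right by (apply Rle_ge, Rlt_le, Rinv_0_lt_compat; lra).
  apply (Rmult_lt_reg_l (INR k + 1)); [lra|]. rewrite Rinv_r by lra.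
  assert (/ eps * eps = 1) by (field; lra).
  assert (/ eps < INR k + 1) by lra. nra.
Qed.

Lemma lim_close (v : nat -> R) (l : R) : (forall k, Rabs (v k - l) <= / (INR k + 1)) -> is_lim_seq v l.
Proof.
  intros H. apply (is_lim_seq_le_le (fun k => l - / (INR k + 1)) v (fun k => l + / (INR k + 1))).
  - intros k. specialize (H k). apply Rabs_le_between' in H. lra.
  - replace (Finite l) with (Finite (l - 0)) by (f_equal; ring).
    apply is_lim_seq_minus'; [apply is_lim_seq_const| apply lim_inv_seq].
  - replace (Finite l) with (Finite (l + 0)) by (f_equal; ring).
    apply is_lim_seq_plus'; [apply is_lim_seq_const| apply lim_inv_seq].
Qed.

Lemma bw_sub (u : nat -> R) (a b : R) : (forall k, a <= u k <= b) ->
  exists phi : nat -> nat, (forall k, (phi k < phi (S k))%nat) /\ exists l : R, is_lim_seq (fun k => u (phi k)) l.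
Proof.
  intros Hab.
  destruct (Bolzano_Weierstrass u (fun c => a <= c <= b) (compact_P3 a b) Hab) as [l Hl].
  assert (Hpick : forall k N, exists p, (N <= p)%nat /\ Rabs (u p - l) < / (INR k + 1)).
  { intros k N.
    assert (Hpos : 0 < / (INR k + 1)) by (apply Rinv_0_lt_compat; pose proof (pos_INR k); lra).
    destruct (Hl (disc l (mkposreal _ Hpos)) N) as [p [Hp1 Hp2]].
    - exists (mkposreal _ Hpos). intros y Hy. exact Hy.
    - exists p. split; [exact Hp1| exact Hp2]. }
  assert (Hpick2 : forall kN : nat * nat, exists p, (snd kN <= p)%nat /\ Rabs (u p - l) < / (INR (fst kN) + 1)).
  { intros [k N]. apply Hpick. }
  assert (Hf : exists f : nat * nat -> nat, forall kN, (snd kN <= f kN)%nat /\ Rabs (u (f kN) - l) < / (INR (fst kN) + 1)).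
  { exists (fun kN => proj1_sig (constructive_indefinite_description _ (Hpick2 kN))).
    intros kN. exact (proj2_sig (constructive_indefinite_description _ (Hpick2 kN))). }
  destruct Hf as [f Hf].
  set (phi := fix phi (k : nat) : nat := match k with O => f (O, O) | S k' => f (S k', S (phi k')) end).
  exists phi. split.
  - intros k. simpl. destruct (Hf (S k, S (phi k))) as [H1 _]. simpl in H1. lia.
  - exists l. apply lim_close. intros k. apply Rlt_le.
    destruct k as [|k]; simpl.
    + destruct (Hf (O, O)) as [_ H2]. exact H2.
    + destruct (Hf (S k, S (phi k))) as [_ H2]. exact H2.
Qed.

Lemma sub_incr (phi psi : nat -> nat) : (forall k, (phi k < phi (S k))%nat) -> (forall k, (psi k < psi (S k))%nat) ->
  forall k, (phi (psi k) < phi (psi (S k)))%nat.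
Proof.
  intros Hphi Hpsi.
  assert (Hmono : forall i j, (i < j)%nat -> (phi i < phi j)%nat).
  { intros i j Hij. induction Hij as [|j Hij IH].
    - apply Hphi.
    - specialize (Hphi j). lia. }
  intros k. apply Hmono. apply Hpsi.
Qed.

Lemma sub_ge (phi : nat -> nat) : (forall k, (phi k < phi (S k))%nat) -> forall k, (k <= phi k)%nat.
Proof.
  intros H k. induction k as [|k IH]; [lia|]. specialize (H k). lia.
Qed.

Lemma gcd_mod_eq (N c1 d1 c2 d2 s t : Z) : N <> 0%Z -> (c1 mod N = c2 mod N)%Z -> (d1 mod N = d2 mod N)%Z ->
  Z.gcd (c1 * s + d1 * t) N = Z.gcd (c2 * s + d2 * t) N.
Proof.
  intros HN Hc Hd.
  assert (E1 : c1 = (c2 + (c1 / N - c2 / N) * N)%Z).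
  { pose proof (Z.div_mod c1 N HN). pose proof (Z.div_mod c2 N HN).
    rewrite Z.mul_sub_distr_r. lia. }
  assert (E2 : d1 = (d2 + (d1 / N - d2 / N) * N)%Z).
  { pose proof (Z.div_mod d1 N HN). pose proof (Z.div_mod d2 N HN).
    rewrite Z.mul_sub_distr_r. lia. }
  set (q1 := (c1 / N - c2 / N)%Z) in *. set (q2 := (d1 / N - d2 / N)%Z) in *.
  rewrite E1, E2.
  replace ((c2 + q1 * N) * s + (d2 + q2 * N) * t)%Z with ((c2 * s + d2 * t) + (q1 * s + q2 * t) * N)%Z by ring.
  rewrite (Z.gcd_comm _ N), (Z.gcd_comm _ N). apply Z.gcd_add_mult_diag_r.
Qed.

Lemma IZR_close_eq (p q : Z) : Rabs (IZR p - IZR q) < 1 -> p = q.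
Proof.
  intros H. apply Rabs_def2 in H. destruct H as [H1 H2].
  rewrite <- minus_IZR in H1, H2.
  assert (IZR (-1) < IZR (p - q)) by (replace (IZR (-1)) with (- (1)) by reflexivity; exact H2).
  apply lt_IZR in H. apply lt_IZR in H1. lia.
Qed.

Lemma gcd_mod_eq1 (N c1 c2 : Z) : N <> 0%Z -> (c1 mod N = c2 mod N)%Z -> Z.gcd c1 N = Z.gcd c2 N.
Proof.
  intros HN Hc.
  pose proof (gcd_mod_eq N c1 0 c2 0 1 0 HN Hc eq_refl) as E.
  replace (c1 * 1 + 0 * 0)%Z with c1 in E by ring.
  replace (c2 * 1 + 0 * 0)%Z with c2 in E by ring. exact E.
Qed.

Theorem proposition3p6 (n : nat) (hn : (0 < n)%nat) : closed_set (M n).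
Proof.
  unfold closed_set, open_set, complementary. intros x Hx.
  apply NNPP. intro Hnb.
  assert (Hinvpos : forall k, 0 < / (INR k + 1)).
  { intros k. apply Rinv_0_lt_compat. pose proof (pos_INR k). lra. }
  assert (Hinv1 : forall k, / (INR k + 1) <= 1).
  { intros k. pose proof (pos_INR k). rewrite <- Rinv_1. apply Rinv_le_contravar; lra. }
  assert (Happ : forall k, exists y, M n y /\ Rabs (y - x) < / (INR k + 1)).
  { intros k. apply NNPP. intro Hno. apply Hnb.
    exists (mkposreal _ (Hinvpos k)). intros y Hy HMy. apply Hno. exists y. split; [exact HMy|].
    unfold disc in Hy. simpl in Hy. exact Hy. }
  destruct (choice_fun _ Happ) as [mf Hmf].
  set (NZ := Z.of_nat n).
  assert (HNZ : (0 < NZ)%Z) by (unfold NZ; lia).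
  assert (Hnorm : forall k, exists a b c d e e', (a*d - b*c = 1)%Z /\ 0 <= e <= 1 /\
    (forall s' t', (s' <> 0 \/ t' <> 0)%Z -> Dd e e' s' t' <> 0 /\
      IZR (Z.gcd (c*s'+d*t') NZ) * Rabs (e - e') <= mf k * Dd e e' s' t') /\
    mf k - / (INR k + 1) <= IZR (Z.gcd c NZ) * Rabs (e - e')).
  { intros k. destruct (Hmf k) as [[xi [xi' [Hne Hmu]]] _].
    exact (normalize n hn xi xi' (mf k) _ Hne Hmu (Hinvpos k)). }
  destruct (choice_fun _ Hnorm) as [fa Ha].
  destruct (choice_fun _ Ha) as [fb Hb].
  destruct (choice_fun _ Hb) as [fc Hc].
  destruct (choice_fun _ Hc) as [fd Hd].
  destruct (choice_fun _ Hd) as [fe He].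
  destruct (choice_fun _ He) as [fe' Hall].
  clear Hnorm Ha Hb Hc Hd He.
  assert (HmB : forall k, mf k <= Rabs x + 1).
  { intros k. destruct (Hmf k) as [_ H]. pose proof (Hinv1 k).
    apply Rabs_def2 in H. pose proof (Rle_abs x). lra. }
  assert (HeB : forall k, 0 <= fe k <= 1) by (intros k; apply Hall).
  assert (He'B : forall k, -(Rabs x + 2) <= fe' k <= Rabs x + 3).
  { intros k. destruct (Hall k) as [_ [He1 [Hi _]]].
    destruct (Hi 1%Z 0%Z (or_introl (ltac:(discriminate) : (1 <> 0)%Z))) as [_ H].
    assert (HD1 : Dd (fe k) (fe' k) 1 0 = 1).
    { unfold Dd. simpl. rewrite !Rmult_0_l, !Rminus_0_r, Rabs_R1. ring. }
    rewrite HD1, Rmult_1_r in H.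
    pose proof (gcd_ge1 (fc k * 1 + fd k * 0) n hn). fold NZ in H0.
    pose proof (Rabs_pos (fe k - fe' k)).
    assert (Rabs (fe k - fe' k) <= mf k) by nra.
    apply Rabs_le_between' in H2. pose proof (HmB k). pose proof (Rabs_pos x). lra. }
  set (cm := fun k => (fc k mod NZ)%Z). set (dm := fun k => (fd k mod NZ)%Z).
  assert (HcmB : forall k, 0 <= IZR (cm k) <= IZR NZ).
  { intros k. unfold cm. pose proof (Z.mod_pos_bound (fc k) NZ HNZ). split; apply IZR_le; lia. }
  assert (HdmB : forall k, 0 <= IZR (dm k) <= IZR NZ).
  { intros k. unfold dm. pose proof (Z.mod_pos_bound (fd k) NZ HNZ). split; apply IZR_le; lia. }
  destruct (bw_sub (fun k => IZR (cm k)) 0 (IZR NZ) HcmB) as [p1 [Hp1 [lc Hlc]]].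
  destruct (bw_sub (fun k => IZR (dm (p1 k))) 0 (IZR NZ) (fun k => HdmB (p1 k))) as [p2 [Hp2 [ld Hld]]].
  destruct (bw_sub (fun k => fe (p1 (p2 k))) 0 1 (fun k => HeB (p1 (p2 k)))) as [p3 [Hp3 [l Hl]]].
  destruct (bw_sub (fun k => fe' (p1 (p2 (p3 k)))) _ _ (fun k => He'B (p1 (p2 (p3 k))))) as [p4 [Hp4 [l' Hl']]].
  set (psi := fun k => p1 (p2 (p3 (p4 k)))).
  assert (H34 := sub_incr p3 p4 Hp3 Hp4).
  assert (H234 := sub_incr p2 _ Hp2 H34).
  assert (Hpsi : forall k, (psi k < psi (S k))%nat) by exact (sub_incr p1 _ Hp1 H234).
  assert (Lc : is_lim_seq (fun k => IZR (cm (psi k))) lc).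
  { exact (is_lim_seq_subseq _ _ _ (eventually_subseq _ H234) Hlc). }
  assert (Ld : is_lim_seq (fun k => IZR (dm (psi k))) ld).
  { exact (is_lim_seq_subseq _ _ _ (eventually_subseq _ H34) Hld). }
  assert (Le : is_lim_seq (fun k => fe (psi k)) l).
  { exact (is_lim_seq_subseq _ _ _ (eventually_subseq _ Hp4) Hl). }
  assert (Le' : is_lim_seq (fun k => fe' (psi k)) l') by exact Hl'.
  assert (Lm0 : is_lim_seq mf x).
  { apply lim_close. intros k. destruct (Hmf k) as [_ H]. lra. }
  assert (Lm : is_lim_seq (fun k => mf (psi k)) x).
  { exact (is_lim_seq_subseq _ _ _ (eventually_subseq _ Hpsi) Lm0). }
  assert (Leps : is_lim_seq (fun k => / (INR (psi k) + 1)) 0).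
  { exact (is_lim_seq_subseq _ _ _ (eventually_subseq _ Hpsi) lim_inv_seq). }
  assert (Hhalf : 0 < 1/2) by lra.
  apply is_lim_seq_spec in Lc. destruct (Lc (mkposreal _ Hhalf)) as [N1 HN1].
  apply is_lim_seq_spec in Ld. destruct (Ld (mkposreal _ Hhalf)) as [N2 HN2].
  simpl in HN1, HN2.
  set (K := Nat.max N1 N2).
  assert (HcK : forall k, cm (psi (k + K)%nat) = cm (psi K)).
  { intros k. apply IZR_close_eq.
    pose proof (HN1 (k + K)%nat ltac:(unfold K; lia)). pose proof (HN1 K ltac:(unfold K; lia)).
    apply Rabs_def2 in H. apply Rabs_def2 in H0. apply Rabs_def1; lra. }
  assert (HdK : forall k, dm (psi (k + K)%nat) = dm (psi K)).
  { intros k. apply IZR_close_eq.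
    pose proof (HN2 (k + K)%nat ltac:(unfold K; lia)). pose proof (HN2 K ltac:(unfold K; lia)).
    apply Rabs_def2 in H. apply Rabs_def2 in H0. apply Rabs_def1; lra. }
  assert (Hx5 : 1/5 <= x).
  { apply (lim_le (fun _ => 1/5) mf).
    - intros k. destruct (Hmf k) as [HM _]. exact (M_lb n hn _ HM).
    - apply is_lim_seq_const.
    - exact Lm0. }
  apply Hx.
  destruct (Hall (psi K)) as [HdetK _].
  apply (limit_M n hn (fa (psi K)) (fb (psi K)) (fc (psi K)) (fd (psi K)) HdetK
    (fun k => fe (psi (k + K)%nat)) (fun k => fe' (psi (k + K)%nat))
    (fun k => mf (psi (k + K)%nat)) (fun k => / (INR (psi (k + K)%nat) + 1)) l l' x).
  - exact (proj1 (is_lim_seq_incr_n _ K _) Le).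
  - exact (proj1 (is_lim_seq_incr_n _ K _) Le').
  - exact (proj1 (is_lim_seq_incr_n _ K _) Lm).
  - exact (proj1 (is_lim_seq_incr_n _ K _) Leps).
  - exact Hx5.
  - intros k s' t' Hst. destruct (Hall (psi (k + K)%nat)) as [_ [_ [Hi _]]].
    destruct (Hi s' t' Hst) as [_ H]. fold NZ.
    rewrite <- (gcd_mod_eq NZ (fc (psi (k + K)%nat)) (fd (psi (k + K)%nat))); [exact H|lia| |].
    + exact (HcK k).
    + exact (HdK k).
  - intros k. destruct (Hall (psi (k + K)%nat)) as [_ [_ [_ H]]]. fold NZ.
    rewrite <- (gcd_mod_eq1 NZ (fc (psi (k + K)%nat))); [exact H|lia|exact (HcK k)].
Qed.
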